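(* Let $P,Q,R_0,R_1$ be integers with $PQ\ne0$, $\Delta:=P^2-4Q\neq0$, $|R_0|+|R_1|>0$, $\gcd(P,Q)=\gcd(R_1,Q)=1$, such that $\alpha/\beta$ is not a root of unity, where $\alpha,\beta$ are the roots of $x^2-Px+Q$. Let $R_{n+2}=PR_{n+1}-QR_n$ ($n\ge0$) and $U_n=(\alpha^n-\beta^n)/(\alpha-\beta)$. Let $n,k$ be positive integers with $n\ge k$ and $n\ge2$, and suppose $R_k,R_{k+1},\dots,R_n$ are all nonzero. If $R_0\ne0$, then \[\frac{R_0^{\,n-k}}{R_kR_{k+1}\cdots R_n}=\sum_{j=k}^{n}\frac{(-1)^{n-j}U_j^{\,n-k}}{Q^{f(j,k,n)}[j-k]_{\boldsymbol U}!\,[n-j]_{\boldsymbol U}!}\cdot\frac1{R_j}.\] If $R_1\ne0$, then \[\frac{R_1^{\,n-k}}{R_kR_{k+1}\cdots R_n}=\sum_{j=k}^{n}\frac{(-1)^{n-j}U_{j-1}^{\,n-k}}{Q^{f(j,k,n)-(n-k)}[j-k]_{\boldsymbol U}!\,[n-j]_{\boldsymbol U}!}\cdot\frac1{R_j}.\]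
   Context: $U_0=0,U_1=1,U_{n+2}=PU_{n+1}-QU_n$; $[j]_{\boldsymbol U}!:=U_1\cdots U_j$ with $[0]_{\boldsymbol U}!=1$. For $k\le j\le n$, $f(j,k,n):=\sum_{k\le i\le n,\ i\ne j}\min(i,j)$. *)

(* Defs.v *)
From HB Require Import structures.
From mathcomp Require Import all_boot all_order all_algebra all_field.
Set Implicit Arguments. Unset Strict Implicit. Unset Printing Implicit Defensive.
Import Order.TTheory GRing.Theory Num.Theory.
Local Open Scope ring_scope.

Fixpoint lucas_pair (P Q a b : int) (n : nat) : int * int :=
  match n with
  | 0%N => (a, b)
  | m.+1 => let: (x, y) := lucas_pair P Q a b m in (y, P * y - Q * x)
  end.

Definition lucas (P Q a b : int) (n : nat) : int := (lucas_pair P Q a b n).1.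

Definition lucasU (P Q : int) (n : nat) : int := lucas P Q 0 1 n.

Definition ufact (P Q : int) (j : nat) : int :=
  \prod_(1 <= i < j.+1) lucasU P Q i.

Definition fjkn (j k n : nat) : nat :=
  (\sum_(k <= i < n.+1 | i != j) minn i j)%N.

(* Main.v *)
Require Import Defs.
From HB Require Import structures.
From mathcomp Require Import all_boot all_order all_algebra all_field.
From mathcomp Require Import zify ring lra.
Import Order.TTheory GRing.Theory Num.Theory.
Local Open Scope ring_scope.

Lemma lucas0 P Q a b : lucas P Q a b 0 = a. Proof. by []. Qed.
Lemma lucas1 P Q a b : lucas P Q a b 1 = b. Proof. by []. Qed.
Lemma lucasSS P Q a b m :
  lucas P Q a b m.+2 = P * lucas P Q a b m.+1 - Q * lucas P Q a b m.
Proof. rewrite /lucas /=; by case: lucas_pair. Qed.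

Lemma vajda1 P Q a b k s :
  lucas P Q a b (k + s) * lucasU P Q s.+1
  = Q ^+ s * lucas P Q a b k + lucas P Q a b (k + s).+1 * lucasU P Q s.
Proof.
elim: s => [|s IH].
  by rewrite addn0 /lucasU lucas1 lucas0 expr0 mulr1 mul1r mulr0 addr0.
have H : Q ^+ s * lucas P Q a b k =
   lucas P Q a b (k + s) * lucasU P Q s.+1 - lucas P Q a b (k + s).+1 * lucasU P Q s.
  by rewrite IH addrK.
rewrite /lucasU in H *.
rewrite exprS -mulrA H !addnS !lucasSS.
ring.
Qed.

Lemma vajda P Q a b k s t :
  lucas P Q a b (k + s) * lucasU P Q (s + t)
  = Q ^+ s * lucas P Q a b k * lucasU P Q t + lucas P Q a b (k + s + t) * lucasU P Q s.
Proof.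
suff: (forall t, (lucas P Q a b (k + s) * lucasU P Q (s + t)
  = Q ^+ s * lucas P Q a b k * lucasU P Q t + lucas P Q a b (k + s + t) * lucasU P Q s) /\
  (lucas P Q a b (k + s) * lucasU P Q (s + t.+1)
  = Q ^+ s * lucas P Q a b k * lucasU P Q t.+1 + lucas P Q a b (k + s + t.+1) * lucasU P Q s)).
  by move=> /(_ t) [].
clear t; elim=> [|t [IH0 IH1]].
  split.
    by rewrite !addn0 /lucasU lucas0 mulr0 add0r.
  by rewrite !addn1 vajda1 /lucasU lucas1 mulr1.
split; first exact: IH1.
move: IH0 IH1; rewrite !addnS /lucasU !lucasSS => IH0 IH1.
rewrite mulrBr !mulrA ![lucas P Q a b (k + s) * _]mulrC -!mulrA IH0 IH1.
ring.
Qed.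
Lemma pf_gen (R V U Fn : nat -> rat) (q X : rat) (e : nat -> nat)
  (G : nat -> nat -> nat -> int) (K0 N0 : nat) :
  q != 0 ->
  (forall m, (0 < m)%N -> U m != 0) ->
  (forall m, Fn m != 0) ->
  Fn 0 = 1 ->
  (forall m, Fn m.+1 = Fn m * U m.+1) ->
  (forall i, (K0 <= i <= N0)%N -> R i != 0) ->
  (forall k n, (K0 <= k)%N -> (k < n)%N -> (n <= N0)%N ->
     V n * R k = q ^+ e k * U (n - k)%N * X + V k * R n) ->
  (forall k j n, (K0 <= k)%N -> (k < j)%N -> (j < n)%N -> (n <= N0)%N ->
     V j * q ^+ e k * U (n - k)%N = V k * U (n - j)%N * q ^+ e j + V n * U (j - k)%N * q ^+ e k) ->
  (forall k, G k k k = 0) ->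
  (forall k j n, (K0 <= k)%N -> (k <= j)%N -> (j < n)%N -> (n <= N0)%N ->
     G j k n = G j k n.-1 + (e j)%:Z) ->
  (forall k j n, (K0 <= k)%N -> (k < j)%N -> (j <= n)%N -> (n <= N0)%N ->
     G j k n = G j k.+1 n + (e k)%:Z) ->
  forall k n, (K0 <= k)%N -> (k <= n)%N -> (n <= N0)%N ->
  X ^+ (n - k) / \prod_(k <= i < n.+1) R i =
  \sum_(k <= j < n.+1) (-1) ^+ (n - j) * V j ^+ (n - k)
      / (q ^ G j k n * Fn (j - k)%N * Fn (n - j)%N) * (R j)^-1.
Proof.
move=> qnz Unz Fnz F0 FS Rnz H1 H2 G0 GA GB.
suff: forall d k n, n = (k + d)%N -> (K0 <= k)%N -> (n <= N0)%N ->
  X ^+ (n - k) / \prod_(k <= i < n.+1) R i =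
  \sum_(k <= j < n.+1) (-1) ^+ (n - j) * V j ^+ (n - k)
      / (q ^ G j k n * Fn (j - k)%N * Fn (n - j)%N) * (R j)^-1.
  move=> H k n Hk Hkn Hn; apply: (H (n - k)%N) => //; lia.
elim=> [|d IH] k n En Hk Hn.
  rewrite En addn0 subnn big_nat1 big_nat1 subnn G0 F0 !expr0. idtac.
  by rewrite expr0z !mul1r.
have Rk : R k != 0 by apply: Rnz; lia.
have Rn : R n != 0 by apply: Rnz; lia.
have Hkn : (k < n)%N by lia.
have En1 : n.-1 = (k + d)%N by lia.
have En2 : n = (k.+1 + d)%N by lia.
have IHa := IH k n.-1 En1 Hk ltac:(lia).
have IHb := IH k.+1 n En2 ltac:(lia) Hn.
have Enk : (n - k = d.+1)%N by lia.
have Enk1 : (n.-1 - k = d)%N by lia.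
have Enk2 : (n - k.+1 = d)%N by lia.
rewrite Enk1 in IHa; rewrite Enk2 in IHb.
have Enn : n.-1.+1 = n by lia.
rewrite Enn in IHa.
set A := \prod_(k.+1 <= i < n) R i.
have PA : \prod_(k <= i < n.+1) R i = R k * A * R n.
  by rewrite big_ltn ?ltnS ?(ltnW Hkn) // big_nat_recr ?mulrA //=; lia.
have PB : \prod_(k.+1 <= i < n.+1) R i = A * R n.
  by rewrite big_nat_recr //=.
have PC : \prod_(k <= i < n) R i = R k * A.
  by rewrite big_ltn.
rewrite PB in IHb; rewrite PC in IHa.
have Anz : A != 0.
  rewrite /A prodf_seq_neq0; apply/allP => i; rewrite mem_index_iota => /andP[h1 h2].
  apply/implyP => _; apply: Rnz; lia.
set c := q ^+ e k * U d.+1.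
have cnz : c != 0 by rewrite mulf_neq0 ?expf_neq0 ?Unz.
apply: (mulfI cnz).
rewrite PA Enk.
have HX : c * X = V n * R k - V k * R n.
  by rewrite (H1 k n) // Enk /c; ring.
have -> : c * (X ^+ d.+1 / (R k * A * R n)) = V n * (X ^+ d / (A * R n)) - V k * (X ^+ d / (R k * A)).
  have -> : c * (X ^+ d.+1 / (R k * A * R n)) = (c * X) * X ^+ d / (R k * A * R n).
    by rewrite exprS !mulrA.
  rewrite HX. field. by rewrite Anz Rk Rn.
rewrite IHa IHb.
rewrite (@big_ltn _ _ _ k n.+1) ?ltnS ?(ltnW Hkn) // (@big_ltn _ _ _ k n) //.
rewrite !(@big_nat_recr _ _ _ n k.+1) //=.
rewrite !subnn Enk Enk1 Enk2 (GA k k n) // (GB k n n) // !expfzDr // F0.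
have Em : c * \sum_(k.+1 <= i < n) (-1) ^+ (n - i) * V i ^+ d.+1 / (q ^ G i k n * Fn (i - k)%N * Fn (n - i)%N) / R i = V n * \sum_(k.+1 <= i < n) (-1) ^+ (n - i) * V i ^+ d / (q ^ G i k.+1 n * Fn (i - k.+1)%N * Fn (n - i)%N) / R i - V k * \sum_(k.+1 <= i < n) (-1) ^+ (n.-1 - i) * V i ^+ d / (q ^ G i k n.-1 * Fn (i - k)%N * Fn (n.-1 - i)%N) / R i.
  rewrite !mulr_sumr -sumrB; apply: eq_big_nat => j /andP[hj1 hj2].
  have Rj : R j != 0 by apply: Rnz; lia.
  have Enj : (n - j = (n.-1 - j).+1)%N by lia.
  have Ejk : (j - k = (j - k.+1).+1)%N by lia.
  have HV := H2 k j n Hk hj1 hj2 Hn.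
  rewrite Enk Enj Ejk in HV.
  have Ha : q ^ G j k n.-1 = q ^ G j k.+1 n * q ^+ e k / q ^+ e j.
    apply: (mulIf (expf_neq0 (e j) qnz)); rewrite divfK ?expf_neq0 //.
    by rewrite !exprnP -!expfzDr // -(GA k j n Hk (ltnW hj1) hj2 Hn) -(GB k j n Hk hj1 (ltnW hj2) Hn).
  rewrite Ha Enj Ejk !FS !exprS.
  move: (V j ^+ d) => Vd.
  have HV' : V j = (V k * U (n.-1 - j).+1 * q ^+ e j + V n * U (j - k.+1).+1 * q ^+ e k) / (q ^+ e k * U d.+1).
    by rewrite -HV -(mulrA (V j)) mulfK // mulf_neq0 ?expf_neq0 ?Unz.
  rewrite HV' /c (GB k j n Hk hj1 (ltnW hj2) Hn) expfzDr // -[q ^ (e k)%:Z]exprnP.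
  have := expfz_neq0 (G j k.+1 n) qnz; have := expf_neq0 (e k) qnz; have := expf_neq0 (e j) qnz.
  have := Unz _ (ltn0Sn (n.-1 - j)%N); have := Unz _ (ltn0Sn (j - k.+1)%N); have := Unz _ (ltn0Sn d).
  have := Fnz (n.-1 - j)%N; have := Fnz (j - k.+1)%N.
  move: (q ^ G j k.+1 n) (q ^+ e k) (q ^+ e j) ((-1) ^+ (n.-1 - j)) => a b b' s.
  move: (U (n.-1 - j)%N.+1) (U (j - k.+1)%N.+1) (U d.+1) (Fn (n.-1 - j)%N) (Fn (j - k.+1)%N) => u1 u2 u3 f1 f2.
  move=> f2nz f1nz u3nz u2nz u1nz b'nz bnz anz.
  field. by rewrite Rj b'nz f1nz u2nz f2nz bnz anz u1nz u3nz.
rewrite !mulrDr Em /c FS !exprS !expr0 -[q ^ (e k)%:Z]exprnP.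
have := expfz_neq0 (G k k n.-1) qnz; have := expfz_neq0 (G n k.+1 n) qnz; have := expf_neq0 (e k) qnz.
have := Unz _ (ltn0Sn d); have := Fnz d.
move: (\sum_(k.+1 <= i < n) _) (\sum_(k.+1 <= i < n) _) => S1 S2.
move: (q ^ G k k n.-1) (q ^ G n k.+1 n) (q ^+ e k) => a1 a2 b.
move: (U d.+1) (Fn d) ((-1) ^+ d) => u f s.
move=> fnz unz bnz a2nz a1nz.
field. by rewrite Rn unz fnz bnz a2nz Rk a1nz.
Qed.

Lemma fA j k n : (k <= j)%N -> (j < n)%N -> fjkn j k n = (fjkn j k n.-1 + j)%N.
Proof.
move=> h1; case: n => // n h2 /=.
rewrite /fjkn (big_mkcond (fun i => i != j)) big_nat_recr /=; last lia.
rewrite -big_mkcond ifT; last lia.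
congr (_ + _)%N; lia.
Qed.

Lemma fB j k n : (k < j)%N -> (j <= n)%N -> fjkn j k n = (fjkn j k.+1 n + k)%N.
Proof.
move=> h1 h2.
rewrite /fjkn (big_mkcond (fun i => i != j)) big_ltn; last lia.
rewrite -big_mkcond ifT; last lia.
rewrite addnC; congr (_ + _)%N; lia.
Qed.

Lemma f0 k : fjkn k k k = 0%N.
Proof. by rewrite /fjkn big_mkcond big_nat1 eqxx. Qed.

Lemma U_nz (P Q : int) : Q != 0 -> P ^+ 2 - 4 * Q != 0 ->
  (forall a b : algC, a + b = P%:~R -> a * b = Q%:~R ->
     forall m : nat, (0 < m)%N -> (a / b) ^+ m != 1) ->
  forall m, (0 < m)%N -> lucasU P Q m != 0.
Proof.
move=> Qnz Dnz Hab.
pose D : algC := (P ^+ 2 - 4 * Q)%:~R.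
pose s := sqrtC D.
have s2 : s ^+ 2 = D := sqrtCK D.
have Dnz' : D != 0 by rewrite intr_eq0.
have snz : s != 0 by apply: contraNneq Dnz' => s0; rewrite -s2 s0 expr0n.
have two : (2 : algC) != 0 by rewrite pnatr_eq0.
pose a := (P%:~R + s) / 2; pose b := (P%:~R - s) / 2.
have hab : a + b = P%:~R by rewrite /a /b; field.
have hab2 : a * b = Q%:~R.
  have -> : a * b = ((P%:~R) ^+ 2 - s ^+ 2) / 4 by rewrite /a /b; field.
  rewrite s2 /D rmorphB !rmorphM /=.
  have -> : (4 : int)%:~R = 4 :> algC by [].
  by field.
clearbody a b.
have cl : forall m, (lucasU P Q m)%:~R * (a - b) = a ^+ m - b ^+ m.
  suff: forall m, (lucasU P Q m)%:~R * (a - b) = a ^+ m - b ^+ m /\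
                  (lucasU P Q m.+1)%:~R * (a - b) = a ^+ m.+1 - b ^+ m.+1.
    by move=> H m; case: (H m).
  elim=> [|m [IH0 IH1]].
    by rewrite /lucasU lucas0 lucas1 mul1r !expr0 !expr1 subrr mul0r.
  split => //.
  rewrite /lucasU lucasSS rmorphB !rmorphM /= -hab -hab2.
  rewrite /lucasU in IH0 IH1.
  rewrite mulrBl -!mulrA IH1 IH0 !exprS; ring.
move=> m m0; apply/negP => /eqP U0.
have := cl m; rewrite U0 mul0r => /esym/eqP; rewrite subr_eq0 => /eqP amb.
have bnz : b != 0.
  apply: contraNneq (Qnz) => b0; move: hab2; rewrite b0 mulr0 => /esym/eqP.
  by rewrite intr_eq0.
have := Hab a b hab hab2 m m0; rewrite expr_div_n amb divff ?eqxx //.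
exact: expf_neq0.
Qed.
Theorem lemma5 (P Q R0 R1 : int) (n k : nat) :
  P * Q != 0 ->
  P ^+ 2 - 4 * Q != 0 ->
  0 < `|R0| + `|R1| ->
  gcdz P Q = 1%N ->
  gcdz R1 Q = 1%N ->
  (forall a b : algC, a + b = P%:~R -> a * b = Q%:~R ->
     forall m : nat, (0 < m)%N -> (a / b) ^+ m != 1) ->
  (0 < k)%N -> (k <= n)%N -> (2 <= n)%N ->
  (forall i : nat, (k <= i <= n)%N -> lucas P Q R0 R1 i != 0) ->
  (R0 != 0 ->
     (R0%:~R : rat) ^+ (n - k) / \prod_(k <= i < n.+1) (lucas P Q R0 R1 i)%:~R
     = \sum_(k <= j < n.+1)
         (-1) ^+ (n - j) * (lucasU P Q j)%:~R ^+ (n - k)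
         / ((Q%:~R : rat) ^+ (fjkn j k n) * (ufact P Q (j - k))%:~R
            * (ufact P Q (n - j))%:~R)
         * ((lucas P Q R0 R1 j)%:~R)^-1) /\
  (R1 != 0 ->
     (R1%:~R : rat) ^+ (n - k) / \prod_(k <= i < n.+1) (lucas P Q R0 R1 i)%:~R
     = \sum_(k <= j < n.+1)
         (-1) ^+ (n - j) * (lucasU P Q j.-1)%:~R ^+ (n - k)
         / ((Q%:~R : rat) ^ ((fjkn j k n)%:Z - (n - k)%:Z)
            * (ufact P Q (j - k))%:~R * (ufact P Q (n - j))%:~R)
         * ((lucas P Q R0 R1 j)%:~R)^-1).
Proof.
move=> PQ Dnz _ _ _ Hab k0 kn n2 HR.
have Qnz : Q != 0 by move: PQ; rewrite mulf_eq0 negb_or => /andP[].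
have UN := U_nz P Q Qnz Dnz Hab.
have Fnz : forall m, ((ufact P Q m)%:~R : rat) != 0.
  move=> m; rewrite intr_eq0 /ufact prodf_seq_neq0; apply/allP => i.
  rewrite mem_index_iota => /andP[i1 _] /=; exact: UN.
have F0 : ((ufact P Q 0)%:~R : rat) = 1 by rewrite /ufact big_geq.
have FS : forall m, ((ufact P Q m.+1)%:~R : rat) = (ufact P Q m)%:~R * (lucasU P Q m.+1)%:~R.
  by move=> m; rewrite /ufact big_nat_recr //= rmorphM.
have qnz : (Q%:~R : rat) != 0 by rewrite intr_eq0.
have Unz : forall m, (0 < m)%N -> ((lucasU P Q m)%:~R : rat) != 0.
  by move=> m m0; rewrite intr_eq0; exact: UN.
have Rnz : forall i, (k <= i <= n)%N -> ((lucas P Q R0 R1 i)%:~R : rat) != 0.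
  by move=> i hi; rewrite intr_eq0; exact: HR.
split=> _.
- apply: (pf_gen (fun i => (lucas P Q R0 R1 i)%:~R)
    (fun j => (lucasU P Q j)%:~R) (fun j => (lucasU P Q j)%:~R)
    (fun m => (ufact P Q m)%:~R) (Q%:~R) (R0%:~R) (fun k => k)
    (fun j k n => (fjkn j k n)%:Z) k n) => //.
  + move=> k' n' h1 h2 h3 /=.
    have E := vajda P Q R0 R1 0 k' (n' - k').
    rewrite add0n subnKC ?(ltnW h2) // lucas0 in E.
    have E' := congr1 (fun z : int => (z%:~R : rat)) E.
    rewrite /= !rmorphD !rmorphM rmorphXn /= in E'.
    by rewrite mulrC E'; ring.
  + move=> k' j n' h1 h2 h3 h4 /=.
    have E := vajda P Q 0 1 k' (j - k') (n' - j).
    have e1 : (k' + (j - k') = j)%N by lia.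
    have e2 : ((j - k') + (n' - j) = n' - k')%N by lia.
    have e3 : (k' + (j - k') + (n' - j) = n')%N by lia.
    rewrite e3 e1 e2 in E.
    have E' := congr1 (fun z : int => (z%:~R : rat)) E.
    rewrite /= !rmorphD !rmorphM rmorphXn /= in E'.
    have qj : (Q%:~R : rat) ^+ j = Q%:~R ^+ (j - k') * Q%:~R ^+ k'.
      by rewrite -exprD subnK // ltnW.
    rewrite /lucasU in E' *; rewrite qj mulrAC E'; ring.
  + by move=> k'; rewrite f0.
  + by move=> k' j n' h1 h2 h3 h4 /=; rewrite fA.
  + by move=> k' j n' h1 h2 h3 h4 /=; rewrite fB.
- apply: (pf_gen (fun i => (lucas P Q R0 R1 i)%:~R)
    (fun j => (lucasU P Q j.-1)%:~R) (fun j => (lucasU P Q j)%:~R)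
    (fun m => (ufact P Q m)%:~R) (Q%:~R) (R1%:~R) predn
    (fun j k n => (fjkn j k n)%:Z - (n - k)%N%:Z) k n) => //.
  + move=> k' n' h1 h2 h3 /=.
    have E := vajda P Q R0 R1 1 k'.-1 (n' - k').
    have e1 : (1 + k'.-1 + (n' - k') = n')%N by lia.
    have e2 : (1 + k'.-1 = k')%N by lia.
    have e3 : (k'.-1 + (n' - k') = n'.-1)%N by lia.
    rewrite e1 e2 e3 lucas1 in E.
    have E' := congr1 (fun z : int => (z%:~R : rat)) E.
    rewrite /= !rmorphD !rmorphM rmorphXn /= in E'.
    by rewrite mulrC E'; ring.
  + move=> k' j n' h1 h2 h3 h4 /=.
    have E := vajda P Q 0 1 k'.-1 (j - k') (n' - j).
    have e1 : (k'.-1 + (j - k') = j.-1)%N by lia.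
    have e2 : ((j - k') + (n' - j) = n' - k')%N by lia.
    have e3 : (k'.-1 + (j - k') + (n' - j) = n'.-1)%N by lia.
    rewrite e3 e1 e2 in E.
    have E' := congr1 (fun z : int => (z%:~R : rat)) E.
    rewrite /= !rmorphD !rmorphM rmorphXn /= in E'.
    have qj : (Q%:~R : rat) ^+ j.-1 = Q%:~R ^+ (j - k') * Q%:~R ^+ k'.-1.
      by rewrite -exprD; congr (_ ^+ _); lia.
    rewrite /lucasU in E' *; rewrite qj mulrAC E'; ring.
  + by move=> k'; rewrite f0 subnn subrr.
  + move=> k' j n' h1 h2 h3 h4 /=; rewrite fA //; lia.
  + move=> k' j n' h1 h2 h3 h4 /=; rewrite fB //; lia.
Qed.
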